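(* Let $\varphi:\mathbb{M}(n)\to\mathbb{C}$ be a positive unital linear functional and let $A\in\mathbb{M}(n)$ be Hermitian. Put $B=A-\varphi(A)I$. Then $$\varphi(B^4)\le\frac{\operatorname{spd}(A)^4}{12}$$ and $$\varphi(B^2)\varphi(B^4)-\varphi(B^2)^3-\varphi(B^3)^2\le\frac{\operatorname{spd}(A)^6}{432}.$$
   Context: $\mathbb{M}(n)$ is the algebra of $n\times n$ complex matrices. A linear functional $\varphi$ on $\mathbb{M}(n)$ is positive if $\varphi(A)\ge0$ whenever $A$ is positive semidefinite, and unital if $\varphi(I)=1$. For $A$ with eigenvalues $\lambda_1,\dots,\lambda_n$, the spread is $\operatorname{spd}(A)=\max_{i,j}|\lambda_i-\lambda_j|$. *)

(* Defs.v *)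
(* Complex numbers are modelled as R[i] for R : realType
   (real_closed's complex, a numClosedFieldType). *)
From HB Require Import structures.
From mathcomp Require Import all_boot all_order all_algebra.
From mathcomp Require Import reals complex.
Set Implicit Arguments. Unset Strict Implicit. Unset Printing Implicit Defensive.
Import Order.TTheory GRing.Theory Num.Theory.
Local Open Scope ring_scope.

Section Defs.
Variable C : numClosedFieldType.
Variable n : nat.

Definition hermitian_mx (A : 'M[C]_n) : Prop := A \is hermsymmx.

Definition psd (A : 'M[C]_n) : Prop :=
  hermitian_mx A /\ forall x : 'rV[C]_n, 0 <= (x *m A *m (map_mx Num.conj x)^T) 0 0.

Definition lin_functional (phi : 'M[C]_n -> C) : Prop :=
  forall (a : C) (X Y : 'M[C]_n), phi (a *: X + Y) = a * phi X + phi Y.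

Definition positive_functional (phi : 'M[C]_n -> C) : Prop :=
  forall A : 'M[C]_n, psd A -> 0 <= phi A.

Definition unital_functional (phi : 'M[C]_n -> C) : Prop := phi 1%:M = 1.

(* Eigenvalues of A, listed with (algebraic) multiplicity: the roots of the
   characteristic polynomial (which splits since C is algebraically closed). *)
Definition eigvals (A : 'M[C]_n) : seq C :=
  sval (closed_field_poly_normal (char_poly A)).

Definition spd (A : 'M[C]_n) : C :=
  \big[Num.max/0]_(a <- eigvals A) \big[Num.max/0]_(b <- eigvals A) `|a - b|.
End Defs.

(* Main.v *)
Require Import Defs.
From HB Require Import structures.
From mathcomp Require Import all_boot all_order all_algebra.
From mathcomp Require Import reals complex.
From mathcomp Require Import ring lra.
Import Order.TTheory GRing.Theory Num.Theory.
Local Open Scope ring_scope.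

Section Lin.
Variables (C : numClosedFieldType) (n : nat) (phi : 'M[C]_n -> C).
Hypothesis hphi : lin_functional phi.

Lemma phi0 : phi 0 = 0.
Proof.
have := hphi 1 0 0; rewrite scale1r addr0 mul1r.
by move/(congr1 (fun z => z - phi 0)); rewrite subrr addrK.
Qed.

Lemma phiD X Y : phi (X + Y) = phi X + phi Y.
Proof. by have := hphi 1 X Y; rewrite scale1r mul1r. Qed.

Lemma phiZ a X : phi (a *: X) = a * phi X.
Proof. by have := hphi a X 0; rewrite !addr0 phi0 addr0. Qed.

Lemma phi_sum (I : finType) (F : I -> 'M[C]_n) :
  phi (\sum_i F i) = \sum_i phi (F i).
Proof. exact: (big_morph phi phiD phi0). Qed.
End Lin.

Local Open Scope sesquilinear_scope.

Lemma psd_rank1 (C : numClosedFieldType) n (u : 'rV[C]_n) : psd (u ^t* *m u).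
Proof.
split.
  rewrite /hermitian_mx; apply/is_hermitianmxP.
  rewrite expr0 scale1r trmx_mul map_mxM.
  by rewrite trmxCK.
move=> x.
rewrite (_ : (map_mx Num.conj x)^T = x^t*); last by rewrite map_trmx.
set y := x^t*.
have -> : x *m (u ^t* *m u) *m y = (u *m y)^t* *m (u *m y).
  by rewrite /y trmx_mul map_mxM trmxCK !mulmxA.
rewrite mxE big_ord1 !mxE.
by rewrite mulrC mul_conjC_ge0.
Qed.

Section Spec.
Variables (C : numClosedFieldType) (n : nat) (phi : 'M[C]_n -> C) (A : 'M[C]_n).
Hypotheses (hlin : lin_functional phi) (hpos : positive_functional phi)
  (hun : unital_functional phi) (hA : hermitian_mx A).

Let P := spectralmx A.
Let Q := invmx P.
Let d := spectral_diag A.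
Let E k := Q *m delta_mx k k *m P.
Let w k := phi (E k).

Lemma specA : A = Q *m diag_mx d *m P.
Proof. exact/orthomx_spectralP/hermitian_normalmx. Qed.

Lemma QP : Q *m P = 1%:M. Proof. exact: mulVmx (spectral_unit A). Qed.
Lemma PQ : P *m Q = 1%:M. Proof. exact: mulmxV (spectral_unit A). Qed.

Lemma E_rank1 k : E k = (row k P)^t* *m row k P.
Proof.
rewrite /E -(mul_delta_mx (0 : 'I_1)) mulmxA -colE -mulmxA -rowE.
by rewrite /Q invmx_unitary ?spectral_unitarymx // -map_col -tr_row.
Qed.

Lemma w_ge0 k : 0 <= w k.
Proof. by apply: hpos; rewrite E_rank1; exact: psd_rank1. Qed.

Lemma phi_diag v : phi (Q *m diag_mx v *m P) = \sum_k v 0 k * w k.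
Proof.
rewrite diag_mx_sum_delta mulmx_sumr mulmx_suml phi_sum //.
apply: eq_bigr => k _; by rewrite -scalemxAr -scalemxAl phiZ.
Qed.

Lemma w_sum : \sum_k w k = 1.
Proof.
have := phi_diag (const_mx 1); rewrite diag_const_mx mulmx1 QP hun => H; rewrite [RHS]H.
by apply: eq_bigr => k _; rewrite mxE mul1r.
Qed.

Lemma phiA : phi A = \sum_k d 0 k * w k.
Proof. by rewrite {1}specA phi_diag. Qed.

Lemma shiftA c : A - c%:M = Q *m diag_mx (\row_k (d 0 k - c)) *m P.
Proof.
have -> : diag_mx (\row_k (d 0 k - c)) = diag_mx d - c%:M.
  by apply/matrixP => i j; rewrite !mxE mulrnBl.
by rewrite mulmxBr mulmxBl -specA mul_mx_scalar -scalemxAl QP scalemx1.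
Qed.

Lemma pow_diag v j : (Q *m diag_mx v *m P) ^+ j = Q *m diag_mx (\row_k (v 0 k ^+ j)) *m P.
Proof.
elim: j => [|j IH].
  have -> : \row_k (v 0 k ^+ 0) = const_mx 1 by apply/rowP => k; rewrite !mxE expr0.
  by rewrite expr0 diag_const_mx mulmx1 QP.
rewrite exprS IH -mulmxE.
rewrite !mulmxA -[Q *m diag_mx v *m P *m Q]mulmxA PQ mulmx1.
rewrite -[Q *m diag_mx v *m diag_mx _]mulmxA mulmx_diag.
by congr (_ *m diag_mx _ *m _); apply/rowP => k; rewrite !mxE exprS.
Qed.

Lemma phi_pow c j : phi ((A - c%:M) ^+ j) = \sum_k (d 0 k - c) ^+ j * w k.
Proof.
rewrite shiftA pow_diag phi_diag; apply: eq_bigr => k _; by rewrite !mxE.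
Qed.

Lemma d_real k : d 0 k \is Num.real.
Proof. by have /mxOverP := hermitian_spectral_diag_real hA; apply. Qed.

Lemma d_eig k : eigenvalue A (d 0 k).
Proof.
apply/eigenvalueP; exists (delta_mx 0 k *m P).
  rewrite {1}specA !mulmxA -[delta_mx 0 k *m P *m Q]mulmxA PQ mulmx1.
  by rewrite -[delta_mx 0 k *m diag_mx d]rowE row_diag_mx scalemxAl.
apply/negP => /eqP H.
have := congr1 (mulmx^~ Q) H; rewrite /= mul0mx -mulmxA PQ mulmx1.
move=> /matrixP /(_ 0 k); rewrite !mxE !eqxx /=.
by move/eqP; rewrite oner_eq0.
Qed.
End Spec.
Arguments w_ge0 {C n phi A}.
Arguments w_sum {C n phi A}.
Arguments phiA {C n phi A}.
Arguments phi_pow {C n phi A}.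
Arguments d_real {C n A}.
Arguments d_eig {C n A}.
Arguments phi0 {C n phi}.

Lemma bigmax_ge (C : numDomainType) (T : eqType) (F : T -> C) (s : seq T) :
  (forall x, 0 <= F x) ->
  0 <= \big[Num.max/0]_(y <- s) F y /\
  (forall x, x \in s -> F x <= \big[Num.max/0]_(y <- s) F y).
Proof.
move=> F0; elim: s => [|a s [IH1 IH2]]; first by rewrite big_nil.
rewrite big_cons.
have ra := ger0_real (F0 a); have rb := ger0_real IH1.
case: (real_leP ra rb) => h; split => // x; rewrite inE => /orP[/eqP->|/IH2] //.
by move=> H; apply: le_trans H (ltW h).
Qed.
Arguments bigmax_ge {C T} F s.

Lemma eig_in (C : numClosedFieldType) n (A : 'M[C]_n) a :
  eigenvalue A a -> a \in eigvals A.
Proof.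
rewrite eigenvalue_root_char /eigvals; case: closed_field_poly_normal => s /= Hs.
by rewrite Hs (monicP (char_poly_monic A)) scale1r root_prod_XsubC.
Qed.

Lemma spd_ge (C : numClosedFieldType) n (A : 'M[C]_n) a b :
  a \in eigvals A -> b \in eigvals A -> `|a - b| <= spd A.
Proof.
move=> ha hb; rewrite /spd.
set F := fun x => \big[Num.max/0]_(y <- eigvals A) `|x - y|.
have F0 : forall x, 0 <= F x by move=> x; case: (bigmax_ge (fun y => `|x - y|) (eigvals A)).
case: (bigmax_ge F (eigvals A)) => // _ /(_ a ha) Ha.
apply: le_trans Ha.
by case: (bigmax_ge (fun y => `|a - y|) (eigvals A)) => // _ /(_ b hb).
Qed.

Lemma spd_ge0 (C : numClosedFieldType) n (A : 'M[C]_n) : 0 <= spd A.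
Proof.
rewrite /spd; case: (bigmax_ge (fun x => \big[Num.max/0]_(y <- eigvals A) `|x - y|) (eigvals A)) => //.
by move=> x; case: (bigmax_ge (fun y => `|x - y|) (eigvals A)).
Qed.
Arguments spd_ge {C n A a b}.
Arguments spd_ge0 {C n}.
Arguments eig_in {C n A a}.

Lemma sum_poly4 (R : comPzRingType) (I : finType) (w t : I -> R) c0 c1 c2 c3 c4 :
  \sum_k (c0 + c1 * t k + c2 * t k ^+ 2 + c3 * t k ^+ 3 + c4 * t k ^+ 4) * w k =
  c0 * \sum_k w k + c1 * \sum_k t k ^+ 1 * w k + c2 * \sum_k t k ^+ 2 * w k
  + c3 * \sum_k t k ^+ 3 * w k + c4 * \sum_k t k ^+ 4 * w k.
Proof. Set Ltac Backtrace.
rewrite !mulr_sumr -!big_split /=; apply: eq_bigr => k _; ring.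
Qed.
Lemma scalar_bound1 (R : realFieldType) (a b m2 m3 m4 S : R) :
  0 <= -(a*b) - m2 ->
  0 <= -m4 + (a+b) * m3 - a*b * m2 ->
  0 <= -m4 + (-(a*b) + 3%:R/4%:R*(a+b)^+2) * m2 - a*b*(a+b)^+2/4%:R ->
  0 <= m2 -> 0 <= b - a -> b - a <= S ->
  m4 <= S^+4/12%:R /\ m2 * m4 - m2 ^+3 - m3 ^+2 <= S^+6/432%:R.
Proof.
move=> F1 F2 F3 m2ge0 Dge0 DS.
set D := b - a.
have D4 : D ^+ 4 <= S ^+ 4 by rewrite lerXn2r // ?nnegrE //; apply: le_trans DS.
have D6 : D ^+ 6 <= S ^+ 6 by rewrite lerXn2r // ?nnegrE //; apply: le_trans DS.
split.
  set K := -(a*b) + 3%:R/4%:R*(a+b)^+2 in F3 *.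
  have K0 : 0 <= K.
    have := sqr_ge0 (a+b); rewrite /K; set u := (a+b)^+2; lra.
  have h1 : K * m2 <= K * (-(a*b)) by rewrite ler_wpM2l //; lra.
  have h2 : m4 <= (a*b)^+2 - a*b*(a+b)^+2.
    have -> : (a*b)^+2 - a*b*(a+b)^+2 = K * (-(a*b)) - a*b*(a+b)^+2/4%:R.
      rewrite /K; by field.
    lra.
  have h3 : (a*b)^+2 - a*b*(a+b)^+2 <= D^+4/12%:R.
    rewrite -subr_ge0.
    have -> : D ^+ 4 / 12%:R - ((a*b)^+2 - a*b*(a+b)^+2) =
       3%:R/16%:R * ((a+b)^+2 - D^+2/3%:R)^+2.
      rewrite /D; by field.
    by apply: mulr_ge0; [lra| exact: sqr_ge0].
  lra.
have h1 : m2 * m4 <= (a+b)* m2* m3 - a*b* m2^+2.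
  have := mulr_ge0 m2ge0 F2; set z := (_ * _); move=> H.
  have : z = (a+b)* m2* m3 - a*b* m2^+2 - m2 * m4 by rewrite /z; ring.
  lra.
have h2 : m2 * m4 - m2 ^+3 - m3 ^+2 <= D^+2/4%:R * m2^+2 - m2^+3.
  suff : 0 <= D^+2/4%:R * m2^+2 - m2^+3 - ((a+b)* m2* m3 - a*b* m2^+2 - m3 ^+2 - m2^+3) by lra.
  have -> : D^+2/4%:R * m2^+2 - m2^+3 - ((a+b)* m2* m3 - a*b* m2^+2 - m3 ^+2 - m2^+3)
     = (m3 - (a+b)/2%:R * m2)^+2.
    rewrite /D; by field.
  exact: sqr_ge0.
have h3 : D^+2/4%:R * m2^+2 - m2^+3 <= D^+6/432%:R.
  rewrite -subr_ge0.
  have -> : D^+6/432%:R - (D^+2/4%:R * m2^+2 - m2^+3) = (m2 - D^+2/6%:R)^+2 * (m2 + D^+2/12%:R).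
    by field.
  apply: mulr_ge0; first exact: sqr_ge0.
  have := sqr_ge0 D; set u := D^+2; lra.
lra.
Qed.

Lemma scalar_main (R : realFieldType) n (r w : 'I_n -> R) (S : R) (k0 : 'I_n) :
  (forall k, 0 <= w k) -> \sum_k w k = 1 -> (forall k l, r k - r l <= S) ->
  let mu := \sum_k r k * w k in
  let m j := \sum_k (r k - mu) ^+ j * w k in
  m 4%N <= S ^+ 4 / 12%:R /\
  m 2%N * m 4%N - m 2%N ^+ 3 - m 3%N ^+ 2 <= S ^+ 6 / 432%:R.
Proof.
move=> w0 w1 rS mu m.
case: (@arg_minP _ _ _ k0 predT r isT) => kmin _ Hmin.
case: (@arg_maxP _ _ _ k0 predT r isT) => kmax _ Hmax.
set a := r kmin - mu; set b := r kmax - mu.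
have m1 : m 1%N = 0.
  rewrite /m; under eq_bigr => k _ do rewrite expr1 mulrBl.
  by rewrite sumrB -mulr_sumr w1 mulr1 subrr.
have G : forall c0 c1 c2 c3 c4 (f : R -> R),
    (forall x, f x = c0 + c1 * x + c2 * x ^+ 2 + c3 * x ^+ 3 + c4 * x ^+ 4) ->
    (forall k, 0 <= f (r k - mu)) ->
    0 <= c0 * 1 + c1 * m 1%N + c2 * m 2%N + c3 * m 3%N + c4 * m 4%N.
  move=> c0 c1 c2 c3 c4 f Hf Hpos.
  rewrite -w1 /m -(@sum_poly4 _ _ w (fun k => r k - mu)).
  apply: sumr_ge0 => k _; rewrite -Hf; exact: mulr_ge0.
have ta : forall k, 0 <= r k - mu - a by move=> k; rewrite /a opprB addrA subrK subr_ge0; exact: Hmin.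
have tb : forall k, 0 <= b - (r k - mu) by move=> k; rewrite /b opprB addrA subrK subr_ge0; exact: Hmax.
have F1 := G (-(a*b)) (a+b) (-1) 0 0 (fun x => (x - a) * (b - x))
  ltac:(move=> x; ring) ltac:(move=> k; exact: mulr_ge0).
have F2 := G 0 0 (-(a*b)) (a+b) (-1) (fun x => (x - a) * (b - x) * x ^+ 2)
  ltac:(move=> x; ring) ltac:(move=> k; apply: mulr_ge0; [exact: mulr_ge0|exact: sqr_ge0]).
have F3 := G (-(a*b)*(a+b)^+2/4%:R) ((a+b)^+3/4%:R - a*b*(a+b))
  (3%:R/4%:R*(a+b)^+2 - a*b) 0 (-1)
  (fun x => (x - a) * (b - x) * (x + (a+b)/2%:R) ^+ 2)
  ltac:(move=> x; by field) ltac:(move=> k; apply: mulr_ge0; [exact: mulr_ge0|exact: sqr_ge0]).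
have m2ge0 : 0 <= m 2%N by apply: sumr_ge0 => k _; apply: mulr_ge0; [exact: sqr_ge0|].
rewrite m1 in F1 F2 F3.
have bma : 0 <= b - a.
  have -> : b - a = r kmax - r kmin by rewrite /a /b; ring.
  by rewrite subr_ge0; exact: Hmax.
have bmaS : b - a <= S.
  have -> : b - a = r kmax - r kmin by rewrite /a /b; ring.
  exact: rS.
clearbody a b.
move: F1 F2 F3 m2ge0; move: (m 2%N) (m 3%N) (m 4%N) => x2 x3 x4 F1 F2 F3 H2.
apply: (@scalar_bound1 _ a b) => //.
- lra.
- lra.
- lra.
Qed.

Local Open Scope complex_scope.

Lemma realC (R : rcfType) (x : R[i]) : x \is Num.real -> x = (complex.Re x)%:C.
Proof.
case: x => a b; rewrite realE !lecE /= => /orP[/andP[/eqP-> _]|/andP[/eqP<- _]] //.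
Qed.

Theorem theorem3p1 (R : realType) (n : nat) (phi : 'M[R[i]]_n -> R[i])
  (A : 'M[R[i]]_n) :
  lin_functional phi -> positive_functional phi -> unital_functional phi ->
  hermitian_mx A ->
  let B := A - (phi A)%:M in
  phi (B ^+ 4) <= spd A ^+ 4 / 12%:R /\
  phi (B ^+ 2) * phi (B ^+ 4) - phi (B ^+ 2) ^+ 3 - phi (B ^+ 3) ^+ 2
    <= spd A ^+ 6 / 432%:R.
Proof.
move=> hlin hpos hun hA.
case: n phi A hlin hpos hun hA => [|n] phi A hlin hpos hun hA B.
  exfalso; move: hun; rewrite /unital_functional (flatmx0 1%:M) phi0 //.
  by move/eqP; rewrite eq_sym oner_eq0.
set P := spectralmx A; set d := spectral_diag A.
set w := fun k => phi (invmx P *m delta_mx k k *m P).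
set r := fun k => complex.Re (d 0 k).
set om := fun k => complex.Re (w k).
set S := complex.Re (spd A).
have dE : forall k, d 0 k = (r k)%:C by move=> k; apply: realC; exact: d_real.
have wE : forall k, w k = (om k)%:C by move=> k; apply: realC; apply: ger0_real; exact: w_ge0.
have SE : spd A = S%:C by apply: realC; apply: ger0_real; exact: spd_ge0.
have om0 : forall k, 0 <= om k by move=> k; rewrite -ler0c -wE; exact: w_ge0.
have om1 : \sum_k om k = 1.
  apply: complexI; rewrite rmorph_sum rmorph1 -(w_sum (A:=A) hlin hun).
  apply: eq_bigr => k _; exact: (esym (wE k)).
have rS : forall k l, r k - r l <= S.
  move=> k l; rewrite -lecR -SE rmorphB /= -!dE.
  apply: le_trans (spd_ge (eig_in (d_eig hA k)) (eig_in (d_eig hA l))).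
  by apply: real_ler_norm; rewrite realB ?d_real.
set muR := \sum_k r k * om k.
have muE : phi A = muR%:C.
  rewrite (phiA hlin hA) rmorph_sum; apply: eq_bigr => k _.
  by rewrite rmorphM /= -dE -wE.
have momE : forall j, phi (B ^+ j) = (\sum_k (r k - muR) ^+ j * om k)%:C.
  move=> j; rewrite /B (phi_pow hlin hA) rmorph_sum; apply: eq_bigr => k _.
  by rewrite rmorphM rmorphXn rmorphB /= -dE -wE muE.
have [H1 H2] := @scalar_main _ _ r om S ord0 om0 om1 rS.
rewrite !momE SE.
have e : forall (x : R) (m : nat), x%:C / m%:R = (x / m%:R)%:C.
  by move=> x m; rewrite rmorphM fmorphV rmorph_nat.
rewrite -!rmorphXn !e -!rmorphM -!rmorphB !lecR.
by split.
Qed.
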